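(* Let $\mathcal{G}$ be a network with non-monitor set $N$ and set of measurement paths $P$. For every integer $k\ge1$, there is a unique maximum-cardinality $k$-identifiable subset $S^*(k)$ of $N$, and $S^*(k+1)\subseteq S^*(k)$.
   Context: $\mathcal{G}$ is a finite connected undirected graph whose node set is partitioned into monitors $M$ and non-monitors $N$; $P$ is an arbitrary set of measurement paths. A failure set is any $F\subseteq N$; a path fails iff it traverses a node of $F$. $P_F$ is the set of paths in $P$ traversing at least one node of $F$; $F_1,F_2$ are distinguishable iff $P_{F_1}\ne P_{F_2}$. $S\subseteq N$ is $k$-identifiable if any two failure sets $F_1,F_2$ with $|F_1|,|F_2|\le k$ and $F_1\cap S\ne F_2\cap S$ are distinguishable. *)

(* Defs.v *)
From mathcomp Require Import all_boot.
Set Implicit Arguments. Unset Strict Implicit. Unset Printing Implicit Defensive.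

Section Tomography.
Variable T : finType.

Definition simple_graph (e : rel T) : Prop := symmetric e /\ irreflexive e.
Definition graph_connected (e : rel T) : Prop := forall x y : T, connect e x y.

Definition measurement_path (e : rel T) (M : {set T}) (p : seq T) : Prop :=
  exists x q, p = x :: q /\ path e x q /\ uniq p /\ x \in M /\ last x q \in M.

Definition path_fails (F : {set T}) (p : seq T) : bool := has (mem F) p.

Definition failed_paths (P : seq (seq T)) (F : {set T}) : pred (seq T) :=
  [pred p | (p \in P) && path_fails F p].

Definition distinguishable (P : seq (seq T)) (F1 F2 : {set T}) : Prop :=
  ~ (failed_paths P F1 =i failed_paths P F2).

Definition k_identifiable (N : {set T}) (P : seq (seq T)) (k : nat) (S : {set T}) : Prop :=
  forall F1 F2 : {set T}, F1 \subset N -> F2 \subset N ->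
    #|F1| <= k -> #|F2| <= k -> F1 :&: S != F2 :&: S -> distinguishable P F1 F2.

Definition max_k_identifiable (N : {set T}) (P : seq (seq T)) (k : nat) (S : {set T}) : Prop :=
  [/\ S \subset N, k_identifiable N P k S &
      forall S' : {set T}, S' \subset N -> k_identifiable N P k S' -> #|S'| <= #|S| ].

End Tomography.

(* Main.v *)
Require Import Defs.
From mathcomp Require Import all_boot.
From Stdlib Require Import Classical.

Section H.
Variable T : finType.
Variables (N : {set T}) (P : seq (seq T)).

Lemma kid_union k A B : k_identifiable N P k A -> k_identifiable N P k B ->
  k_identifiable N P k (A :|: B).
Proof.
move=> hA hB F1 F2 s1 s2 c1 c2 ne.
case: (boolP (F1 :&: A != F2 :&: A)) => [hne|]; first exact: hA.
rewrite negbK => /eqP eA.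
apply: hB => //; apply/negP => /eqP eB; move/negP: ne; apply.
by rewrite !setIUr eA eB.
Qed.

Lemma kid_mono k A : k_identifiable N P k.+1 A -> k_identifiable N P k A.
Proof.
move=> h F1 F2 s1 s2 c1 c2 ne; apply: h => //; exact: leqW.
Qed.

Lemma kid0 k : k_identifiable N P k set0.
Proof. by move=> F1 F2 _ _ _ _; rewrite !setI0 eqxx. Qed.

Lemma max_union k (S S' : {set T}) : max_k_identifiable N P k S -> S' \subset N ->
  k_identifiable N P k S' -> S' \subset S.
Proof.
case=> sN kS mx s'N kS'.
have hs : S :|: S' \subset N by rewrite subUset sN.
have le := mx (S :|: S') hs (@kid_union k _ _ kS kS'). have : S \subset S :|: S' by apply: subsetUl.
move=> sub; have E := subset_leqif_card sub.
have eq: S :|: S' = S.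
  apply/eqP; rewrite eq_sym eqEcard sub; exact: le.
by rewrite -eq subsetUr.
Qed.

Lemma max_exists k : exists S : {set T}, max_k_identifiable N P k S.
Proof.
apply: NNPP => nex.
have step : forall n : nat, exists S : {set T}, [/\ S \subset N, k_identifiable N P k S & n <= #|S|].
  elim=> [|n [S [sN kS le]]]; first by exists set0; split; rewrite ?sub0set //; exact: kid0.
  have : ~ (forall S' : {set T}, S' \subset N -> k_identifiable N P k S' -> #|S'| <= #|S|).
    by move=> h; apply: nex; exists S; split.
  move=> /not_all_ex_not [S' h].
  apply: NNPP => nn; apply: h => s' k'; rewrite leqNgt; apply/negP => lt.
  by apply: nn; exists S'; split => //; apply: leq_ltn_trans lt.
have [S [_ _ le]] := step #|T|.+1.
by move: (max_card S); rewrite leqNgt (leq_trans _ le).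
Qed.
End H.
Arguments max_union {T N P k S S'}.
Arguments kid_mono {T N P k A}.

Theorem corollary2 (T : finType) (e : rel T) (M : {set T}) (P : seq (seq T)) :
  simple_graph e -> graph_connected e ->
  (forall p, p \in P -> measurement_path e M p) ->
  let N := ~: M in
  forall k : nat, 1 <= k ->
    (exists S : {set T}, max_k_identifiable N P k S /\
       forall S' : {set T}, max_k_identifiable N P k S' -> S' = S) /\
    (forall S1 S2 : {set T}, max_k_identifiable N P k.+1 S1 ->
       max_k_identifiable N P k S2 -> S1 \subset S2).
Proof.
move=> _ _ _ N k _; split.
  have [S hS] := @max_exists T N P k; exists S; split => // S' hS'.
  apply/eqP; rewrite eqEsubset.
  case: (hS) => sN kS _; case: (hS') => sN' kS' _.
  by rewrite (max_union hS sN' kS') (max_union hS' sN kS).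
move=> S1 S2 h1 h2; case: h1 => s1 k1 _.
exact: (max_union h2 s1 (kid_mono k1)).
Qed.
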